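(* Let $(X,\tau)$ be a metrizable topological space, let $W\subseteq X$ be such that $\operatorname{den}(W)$ is a cardinal of uncountable cofinality, and let $D$ be a finite family of metrics on $X$ each of which induces the topology $\tau$. Then there exists $\varepsilon_0>0$ such that for every $\varepsilon\in\,]0,\varepsilon_0[$ the values $\hat{\mathcal N}_\varepsilon(W)$, $\hat{\mathcal N}^X_\varepsilon(W)$, $\hat{\mathcal M}_\varepsilon(W)$ and $\mathcal M^*_\varepsilon(W)$, computed with respect to $d\in D$, do not depend on the choice of $d\in D$.
   Context: $\operatorname{den}(W)$ is the minimal cardinality of a dense subset of $W$ (a topological quantity). Cofinality of a cardinal $\beta$: least ordinal $\alpha$ admitting a strictly increasing cofinal map $\alpha\to\beta$. For a metric $d$: $B(c,r)=\{x:d(x,c)\le r\}$; $C$ is an $\varepsilon$-net for $W$ if $W\subseteq\bigcup_{c\in C}B(c,\varepsilon)$; $A$ is $\varepsilon$-distinguishable if $d(x,y)>\varepsilon$ for distinct $x,y\in A$. $\hat{\mathcal N}^A_\varepsilon(W)$ is the minimal cardinality of an $\varepsilon$-net $C\subseteq A$ for $W$; $\hat{\mathcal N}_\varepsilon(W):=\hat{\mathcal N}^W_\varepsilon(W)$; $\hat{\mathcal M}_\varepsilon(W)$ is the smallest cardinality of an $\varepsilon$-distinguishable $A\subseteq W$ that is maximal under inclusion among $\varepsilon$-distinguishable subsets of $W$; $\mathcal M^*_\varepsilon(W)$ is the smallest cardinal $\ge\operatorname{card}(A)$ for every $\varepsilon$-distinguishable $A\subseteq W$. *)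

(* Defs.v *)
(* classical reals. Cardinals are represented by (sub)types,
   compared via injections / bijections. *)
From Stdlib Require Import Reals List.
Open Scope R_scope.

Definition card_le (A B : Type) : Prop :=
  exists f : A -> B, forall a1 a2, f a1 = f a2 -> a1 = a2.
Definition card_eq (A B : Type) : Prop :=
  exists (f : A -> B) (g : B -> A), (forall a, g (f a) = a) /\ (forall b, f (g b) = b).

Definition sub {X : Type} (A : X -> Prop) : Type := { x : X | A x }.
Definition incl {X : Type} (A B : X -> Prop) : Prop := forall x, A x -> B x.

Definition min_card {X : Type} (P : (X -> Prop) -> Prop) (A : X -> Prop) : Prop :=
  P A /\ forall B, P B -> card_le (sub A) (sub B).

Definition strict_well_order {T : Type} (lt : T -> T -> Prop) : Prop :=
  (forall x, ~ lt x x) /\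
  (forall x y z, lt x y -> lt y z -> lt x z) /\
  (forall x y, lt x y \/ x = y \/ lt y x) /\
  well_founded lt.

Definition countable (A : Type) : Prop := card_le A nat.

(* lt is a well-order of T of the order type of the initial ordinal |T|
   (von Neumann cardinal): every proper initial segment has cardinality < |T| *)
Definition initial_order {T : Type} (lt : T -> T -> Prop) : Prop :=
  strict_well_order lt /\
  forall k : T, ~ card_le T { j : T | lt j k }.

(* The cardinal |T| has uncountable cofinality: no countable ordinal
   (countable well-ordered set) admits a strictly increasing cofinal map into |T|. *)
Definition uncountable_cofinality (T : Type) : Prop :=
  exists lt : T -> T -> Prop, initial_order lt /\
    forall (A : Type) (ltA : A -> A -> Prop) (f : A -> T),
      strict_well_order ltA -> countable A ->
      (forall a b, ltA a b -> lt (f a) (f b)) ->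
      ~ (forall k : T, exists a, k = f a \/ lt k (f a)).

Definition is_metric {X : Type} (d : X -> X -> R) : Prop :=
  (forall x y, 0 <= d x y) /\
  (forall x y, d x y = 0 <-> x = y) /\
  (forall x y, d x y = d y x) /\
  (forall x y z, d x z <= d x y + d y z).

(* tau : the open sets of the topology on X *)
Definition induces {X : Type} (d : X -> X -> R) (tau : (X -> Prop) -> Prop) : Prop :=
  forall U, tau U <-> (forall x, U x -> exists r, 0 < r /\ forall y, d x y < r -> U y).

Definition metrizable {X : Type} (tau : (X -> Prop) -> Prop) : Prop :=
  exists d, is_metric d /\ induces d tau.

(* S is a dense subset of W (w.r.t. the subspace topology of W) *)
Definition dense_in {X : Type} (tau : (X -> Prop) -> Prop) (W S : X -> Prop) : Prop :=
  incl S W /\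
  forall U, tau U -> forall w, W w -> U w -> exists s, S s /\ U s.

(* closed ball B(c,r) = {x | d(x,c) <= r} *)
Definition is_net {X : Type} (d : X -> X -> R) (eps : R) (W C : X -> Prop) : Prop :=
  forall w, W w -> exists c, C c /\ d w c <= eps.

Definition net_in {X : Type} (d : X -> X -> R) (eps : R) (A W : X -> Prop)
  (C : X -> Prop) : Prop := incl C A /\ is_net d eps W C.

Definition distinguishable {X : Type} (d : X -> X -> R) (eps : R) (A : X -> Prop) : Prop :=
  forall x y, A x -> A y -> x <> y -> eps < d x y.

Definition maximal_distinguishable {X : Type} (d : X -> X -> R) (eps : R)
  (W A : X -> Prop) : Prop :=
  incl A W /\ distinguishable d eps A /\
  forall B, incl B W -> distinguishable d eps B -> incl A B -> incl B A.

(* K has cardinality M^*_eps(W): the least cardinal >= card(A) for all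
   eps-distinguishable A ⊆ W *)
Definition is_Mstar {X : Type} (d : X -> X -> R) (eps : R) (W : X -> Prop) (K : Type) : Prop :=
  (forall A, incl A W -> distinguishable d eps A -> card_le (sub A) K) /\
  (forall T : Type,
     (forall A, incl A W -> distinguishable d eps A -> card_le (sub A) T) ->
     card_le K T).

(* Nhat^A_eps(W) w.r.t. d has cardinality |C| *)
Definition is_NhatA {X : Type} (d : X -> X -> R) (eps : R) (A W C : X -> Prop) : Prop :=
  min_card (net_in d eps A W) C.

(* Mhat_eps(W) w.r.t. d has cardinality |A| *)
Definition is_Mhat {X : Type} (d : X -> X -> R) (eps : R) (W A : X -> Prop) : Prop :=
  min_card (maximal_distinguishable d eps W) A.

(* Main.v *)
Require Import Defs.
From Stdlib Require Import Reals List Classical ClassicalEpsilon ProofIrrelevance FunctionalExtensionality PropExtensionality Wf_nat Inverse_Image Cantor Lia Lra.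
Open Scope R_scope.

Lemma card_le_refl (A : Type) : card_le A A.
Proof. exists (fun a => a); auto. Qed.

Lemma card_le_trans (A B C : Type) : card_le A B -> card_le B C -> card_le A C.
Proof.
  intros [f Hf] [g Hg]. exists (fun a => g (f a)). intros a1 a2 H; apply Hf, Hg, H.
Qed.

Lemma card_eq_sym (A B : Type) : card_eq A B -> card_eq B A.
Proof. intros (f & g & H1 & H2). exists g, f; auto. Qed.

Lemma card_eq_trans (A B C : Type) : card_eq A B -> card_eq B C -> card_eq A C.
Proof.
  intros (f & g & H1 & H2) (f' & g' & H1' & H2').
  exists (fun a => f' (f a)), (fun c => g (g' c)). split; intros.
  - rewrite H1'. apply H1.
  - rewrite H2. apply H2'.
Qed.

Section CSB.
Variables (A B : Type) (f : A -> B) (g : B -> A).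
Hypothesis (Hf : forall a1 a2, f a1 = f a2 -> a1 = a2) (Hg : forall b1 b2, g b1 = g b2 -> b1 = b2).

Inductive Zc : A -> Prop :=
| Z0 : forall b, (forall a, f a <> b) -> Zc (g b)
| Zs : forall a, Zc a -> Zc (g (f a)).

Lemma Zc_img a : Zc a -> exists b, g b = a.
Proof. intros []; eauto. Qed.

Definition hh (a : A) : B :=
  match excluded_middle_informative (Zc a) with
  | left H => proj1_sig (constructive_indefinite_description _ (Zc_img a H))
  | right _ => f a
  end.

Lemma kk_ex b : ~ Zc (g b) -> exists a, f a = b.
Proof. intros H. apply NNPP; intro H'. apply H. apply Z0. intros a E; apply H'; eauto. Qed.

Definition kk (b : B) : A :=
  match excluded_middle_informative (Zc (g b)) with
  | left _ => g b
  | right H => proj1_sig (constructive_indefinite_description _ (kk_ex b H))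
  end.

Lemma notZ_gf a : ~ Zc a -> ~ Zc (g (f a)).
Proof.
  intros H H'. inversion H' as [b Hb E | a' Ha' E].
  - apply Hg in E. apply (Hb a); auto.
  - apply Hg, Hf in E. subst. auto.
Qed.

Lemma csb_kh a : kk (hh a) = a.
Proof.
  unfold hh. destruct (excluded_middle_informative (Zc a)) as [H|H].
  - destruct (constructive_indefinite_description _ _) as [b Hb]; simpl.
    unfold kk. destruct (excluded_middle_informative (Zc (g b))) as [H1|H1]; auto.
    exfalso; apply H1; rewrite Hb; auto.
  - unfold kk. destruct (excluded_middle_informative (Zc (g (f a)))) as [H1|H1].
    + exfalso; exact (notZ_gf a H H1).
    + destruct (constructive_indefinite_description _ _) as [a' Ha']; simpl. auto.
Qed.

Lemma csb_hk b : hh (kk b) = b.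
Proof.
  unfold kk. destruct (excluded_middle_informative (Zc (g b))) as [H|H].
  - unfold hh. destruct (excluded_middle_informative (Zc (g b))) as [H1|H1]; [|contradiction].
    destruct (constructive_indefinite_description _ _) as [b' Hb']; simpl. auto.
  - destruct (constructive_indefinite_description _ _) as [a Ha]; simpl.
    unfold hh. destruct (excluded_middle_informative (Zc a)) as [H1|H1].
    + exfalso. apply H. rewrite <- Ha. apply Zs; auto.
    + auto.
Qed.
End CSB.

Lemma csb (A B : Type) : card_le A B -> card_le B A -> card_eq A B.
Proof.
  intros [f Hf] [g Hg]. exists (hh A B f g), (kk A B f g). split; intros.
  - apply csb_kh; auto.
  - apply csb_hk; auto.
Qed.
Lemma wf_least (U : Type) (lt : U -> U -> Prop) : well_founded lt ->
  forall P : U -> Prop, (exists x, P x) -> exists x, P x /\ forall y, P y -> ~ lt y x.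
Proof.
  intros Hwf P [x Hx]. induction x as [x IH] using (well_founded_ind Hwf).
  destruct (classic (exists y, P y /\ lt y x)) as [[y [Hy Hyx]]|H].
  - exact (IH y Hyx Hy).
  - exists x; split; auto. intros y Hy Hl; apply H; eauto.
Qed.

Section Cmp.
Variables (U : Type) (lt : U -> U -> Prop).
Hypothesis Hwo : strict_well_order lt.
Variable Y : U -> Prop.

Definition ltY (a b : sub Y) : Prop := lt (proj1_sig a) (proj1_sig b).
Lemma ltY_wf : well_founded ltY.
Proof. destruct Hwo as (_&_&_&H). apply (wf_inverse_image _ _ lt (@proj1_sig U Y)); auto. Qed.

Definition Fpsi (y : sub Y) (rec : forall y', ltY y' y -> U) : U :=
  epsilon (inhabits (proj1_sig y))
    (fun s => (forall y' (H : ltY y' y), rec y' H <> s) /\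
              forall s', (forall y' (H : ltY y' y), rec y' H <> s') -> ~ lt s' s).

Definition psi : sub Y -> U := Fix ltY_wf (fun _ => U) Fpsi.

Lemma psi_eq y : psi y = Fpsi y (fun y' _ => psi y').
Proof.
  unfold psi. apply (Fix_eq ltY_wf (fun _ => U) Fpsi). intros x f g Hfg.
  assert (f = g) as ->; auto.
  apply functional_extensionality_dep; intro y'. apply functional_extensionality_dep; intro p. auto.
Qed.

Lemma lt_irr x : ~ lt x x.
Proof. destruct Hwo as (H&_); auto. Qed.
Lemma lt_trans x y z : lt x y -> lt y z -> lt x z.
Proof. destruct Hwo as (_&H&_); eauto. Qed.
Lemma lt_tot x y : lt x y \/ x = y \/ lt y x.
Proof. destruct Hwo as (_&_&H&_); eauto. Qed.

Lemma psi_props : forall y,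
  (psi y = proj1_sig y \/ lt (psi y) (proj1_sig y)) /\
  (forall s, lt s (psi y) -> exists y', ltY y' y /\ psi y' = s) /\
  (forall y', ltY y' y -> psi y' <> psi y).
Proof.
  destruct Hwo as (_&_&_&Hwf).
  intro y. induction y as [y IH] using (well_founded_ind ltY_wf).
  set (P := fun s => (forall y' (H : ltY y' y), psi y' <> s)).
  assert (HP : P (proj1_sig y)).
  { intros y' Hy' E. destruct (IH y' Hy') as [[E1|E1] _].
    - unfold ltY in Hy'. rewrite <- E1, E in Hy'. eapply lt_irr; eauto.
    - unfold ltY in Hy'. rewrite E in E1. eapply lt_irr, lt_trans; eauto. }
  destruct (wf_least U lt Hwf P (ex_intro _ _ HP)) as [m [Hm Hmin]].
  assert (Hpsi : P (psi y) /\ forall s', P s' -> ~ lt s' (psi y)).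
  { rewrite psi_eq. unfold Fpsi.
    apply (epsilon_spec (inhabits (proj1_sig y))
      (fun s => (forall y' (H : ltY y' y), psi y' <> s) /\
              forall s', (forall y' (H : ltY y' y), psi y' <> s') -> ~ lt s' s)).
    exists m. split; auto. }
  destruct Hpsi as [H1 H2]. split; [|split].
  - destruct (lt_tot (psi y) (proj1_sig y)) as [?|[?|?]]; auto.
    exfalso; eapply H2; [exact HP|]. auto.
  - intros s Hs. apply NNPP; intro H. apply (H2 s); auto.
    intros y' Hy' E; apply H; eauto.
  - intros y' Hy' E. eapply H1; eauto.
Qed.

Lemma psi_mono y1 y2 : ltY y1 y2 -> lt (psi y1) (psi y2).
Proof.
  intros H. destruct (psi_props y2) as (_&_&C2).
  destruct (lt_tot (psi y1) (psi y2)) as [?|[E|E]]; auto.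
  - exfalso; eapply C2; eauto.
  - destruct (psi_props y1) as (_&B1&_). destruct (B1 _ E) as [y'' [Hl Ey]].
    exfalso. eapply C2. unfold ltY in *. eapply lt_trans; eauto. auto.
Qed.

Lemma psi_inj y1 y2 : psi y1 = psi y2 -> y1 = y2.
Proof.
  intros E. destruct (lt_tot (proj1_sig y1) (proj1_sig y2)) as [H|[H|H]].
  - apply psi_mono in H. rewrite E in H. exfalso; eapply lt_irr; eauto.
  - destruct y1, y2; simpl in H; subst. f_equal; apply proof_irrelevance.
  - apply psi_mono in H. rewrite E in H. exfalso; eapply lt_irr; eauto.
Qed.

Lemma cmp : ~ card_le U (sub Y) ->
  exists k (f : sub Y -> U), (forall a, lt (f a) k) /\ (forall a b, f a = f b -> a = b).
Proof.
  intros Hn. destruct (classic (exists k, forall y, psi y <> k)) as [[k Hk]|H].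
  - exists k, psi. split; [|apply psi_inj].
    intros a. destruct (lt_tot (psi a) k) as [?|[?|E]]; auto.
    + exfalso; eapply Hk; eauto.
    + destruct (psi_props a) as (_&B&_). destruct (B _ E) as [y' [_ Ey]].
      exfalso; eapply Hk; eauto.
  - exfalso. apply Hn.
    assert (Hs : forall k, exists y, psi y = k).
    { intros k; apply NNPP; intro H'; apply H; exists k; intros y E; apply H'; eauto. }
    exists (fun k => proj1_sig (constructive_indefinite_description _ (Hs k))).
    intros a1 a2 E.
    destruct (constructive_indefinite_description _ (Hs a1)) as [y1 E1].
    destruct (constructive_indefinite_description _ (Hs a2)) as [y2 E2]. simpl in E. subst. auto.
Qed.
End Cmp.
Section NoMax.
Variables (V : Type) (lt : V -> V -> Prop).
Hypothesis Hwo : strict_well_order lt.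
Hypothesis Hnm : forall t, exists u, lt t u.

Lemma nm_irr x : ~ lt x x.
Proof. destruct Hwo as (H&_); auto. Qed.
Lemma nm_trans x y z : lt x y -> lt y z -> lt x z.
Proof. destruct Hwo as (_&H&_); eauto. Qed.
Lemma nm_tot x y : lt x y \/ x = y \/ lt y x.
Proof. destruct Hwo as (_&_&H&_); eauto. Qed.
Lemma nm_wf : well_founded lt.
Proof. destruct Hwo as (_&_&_&H); eauto. Qed.

Lemma nxt_ex t : exists u, lt t u /\ forall v, lt t v -> ~ lt v u.
Proof. apply (wf_least V lt nm_wf (fun u => lt t u)); auto. Qed.

Definition nxt t : V := proj1_sig (constructive_indefinite_description _ (nxt_ex t)).

Lemma nxt_spec t : lt t (nxt t) /\ forall v, lt t v -> ~ lt v (nxt t).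
Proof. unfold nxt. destruct (constructive_indefinite_description _ _); auto. Qed.

Lemma nxt_inj a b : nxt a = nxt b -> a = b.
Proof.
  intros E. destruct (nm_tot a b) as [H|[H|H]]; auto; exfalso.
  - destruct (nxt_spec a) as [_ Ha]. destruct (nxt_spec b) as [Hb _].
    apply (Ha b H). rewrite E; auto.
  - destruct (nxt_spec b) as [_ Hb]. destruct (nxt_spec a) as [Ha _].
    apply (Hb a H). rewrite <- E; auto.
Qed.

Definition lim b := forall p, nxt p <> b.

Lemma dec_ex t : exists bn : V * nat, lim (fst bn) /\ t = Nat.iter (snd bn) nxt (fst bn).
Proof.
  induction t as [t IH] using (well_founded_ind nm_wf).
  destruct (classic (lim t)) as [H|H].
  - exists (t, 0%nat); simpl; auto.
  - apply not_all_ex_not in H. destruct H as [p Hp]. apply NNPP in Hp.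
    destruct (IH p) as [[b n] [Hb E]]. rewrite <- Hp. apply nxt_spec.
    exists (b, S n); simpl in *. split; auto. rewrite <- E; auto.
Qed.

Lemma iter_uniq n : forall m b b', lim b -> lim b' ->
  Nat.iter n nxt b = Nat.iter m nxt b' -> n = m /\ b = b'.
Proof.
  induction n as [|n IH]; intros [|m] b b' Hb Hb' E; simpl in E.
  - auto.
  - exfalso. apply (Hb (Nat.iter m nxt b')). auto.
  - exfalso. apply (Hb' (Nat.iter n nxt b)). auto.
  - apply nxt_inj in E. destruct (IH m b b' Hb Hb' E). auto.
Qed.

Definition decp t : V * nat := proj1_sig (constructive_indefinite_description _ (dec_ex t)).

Lemma nomax_prod : card_le (nat * V) V.
Proof.
  exists (fun mt => Nat.iter (to_nat (fst mt, snd (decp (snd mt)))) nxt (fst (decp (snd mt)))).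
  intros [m1 t1] [m2 t2]; cbn [fst snd]. unfold decp.
  destruct (constructive_indefinite_description _ (dec_ex t1)) as [[b1 n1] [H1 E1]].
  destruct (constructive_indefinite_description _ (dec_ex t2)) as [[b2 n2] [H2 E2]].
  cbn [proj1_sig fst snd] in *. intros E. apply iter_uniq in E; auto. destruct E as [E Eb].
  assert (E3 := f_equal of_nat E). rewrite (cancel_of_to (m1, n1)), (cancel_of_to (m2, n2)) in E3. inversion E3. subst. auto.
Qed.
End NoMax.

Lemma sub_eq (A : Type) (P : A -> Prop) (a b : sig P) : proj1_sig a = proj1_sig b -> a = b.
Proof. destruct a, b; simpl; intros; subst; f_equal; apply proof_irrelevance. Qed.

Lemma choice1 (A B : Type) (P : A -> B -> Prop) :
  (forall a, exists b, P a b) -> exists g : A -> B, forall a, P a (g a).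
Proof.
  intros H. exists (fun a => proj1_sig (constructive_indefinite_description _ (H a))).
  intros a. destruct (constructive_indefinite_description _ (H a)); auto.
Qed.

Lemma choice2 (A B : Type) (C : A -> Type) (P : forall a, B -> C a -> Prop) :
  (forall a, exists b c, P a b c) -> exists (g : A -> B) (h : forall a, C a), forall a, P a (g a) (h a).
Proof.
  intros H. assert (H' : forall a, exists bc : {b : B & C a}, P a (projT1 bc) (projT2 bc)).
  { intros a. destruct (H a) as [b [c Hc]]. exists (existT _ b c); auto. }
  exists (fun a => projT1 (proj1_sig (constructive_indefinite_description _ (H' a)))).
  exists (fun a => projT2 (proj1_sig (constructive_indefinite_description _ (H' a)))).
  intros a. destruct (constructive_indefinite_description _ (H' a)); auto.
Qed.

Lemma swo_sub (U : Type) (lt : U -> U -> Prop) (P : U -> Prop) :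
  strict_well_order lt -> strict_well_order (fun a b : sub P => lt (proj1_sig a) (proj1_sig b)).
Proof.
  intros (H1&H2&H3&H4). split; [|split; [|split]].
  - intros x; apply H1.
  - intros x y z; apply H2.
  - intros x y. destruct (H3 (proj1_sig x) (proj1_sig y)) as [?|[?|?]]; auto.
    right; left; apply sub_eq; auto.
  - apply (wf_inverse_image _ _ lt (@proj1_sig U P)); auto.
Qed.

Lemma swo_nat : strict_well_order Peano.lt.
Proof.
  split; [|split; [|split]].
  - intros x; lia.
  - intros; lia.
  - intros; lia.
  - apply lt_wf.
Qed.

Section Metric.
Variables (X : Type) (tau : (X -> Prop) -> Prop) (d : X -> X -> R).
Hypothesis Hd : is_metric d.
Hypothesis Hi : induces d tau.

Lemma d_pos x y : 0 <= d x y.  Proof. destruct Hd as (H&_); auto. Qed.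
Lemma d_xx x : d x x = 0.  Proof. destruct Hd as (_&H&_); apply H; auto. Qed.
Lemma d_eq x y : d x y = 0 -> x = y.  Proof. destruct Hd as (_&H&_); apply H; auto. Qed.
Lemma d_sym x y : d x y = d y x.  Proof. destruct Hd as (_&_&H&_); auto. Qed.
Lemma d_tri x y z : d x z <= d x y + d y z.  Proof. destruct Hd as (_&_&_&H); auto. Qed.

Lemma ball_open x r : tau (fun y => d x y < r).
Proof.
  apply Hi. intros y Hy. exists (r - d x y). split; [lra|].
  intros z Hz. pose proof (d_tri x y z). lra.
Qed.

Lemma dense_near W S : dense_in tau W S -> forall w, W w -> forall r, 0 < r ->
  exists s, S s /\ d w s < r.
Proof.
  intros [_ H] w Hw r Hr. destruct (H _ (ball_open w r) w Hw) as [s [Hs Hs']]; eauto.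
  rewrite d_xx; auto.
Qed.
End Metric.

Section Main.
Variables (X : Type) (tau : (X -> Prop) -> Prop) (W S : X -> Prop) (lt : sub S -> sub S -> Prop).
Hypothesis Hio : initial_order lt.
Hypothesis Hcof : forall (A : Type) (ltA : A -> A -> Prop) (f : A -> sub S),
      strict_well_order ltA -> countable A ->
      (forall a b, ltA a b -> lt (f a) (f b)) ->
      ~ (forall k : sub S, exists a, k = f a \/ lt k (f a)).
Hypothesis HdS : dense_in tau W S.
Hypothesis Hmin : forall B, dense_in tau W B -> card_le (sub S) (sub B).

Lemma lswo : strict_well_order lt.  Proof. apply Hio. Qed.
Lemma l_irr x : ~ lt x x. Proof. destruct lswo as (H&_); auto. Qed.
Lemma l_trans x y z : lt x y -> lt y z -> lt x z. Proof. destruct lswo as (_&H&_); eauto. Qed.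
Lemma l_tot x y : lt x y \/ x = y \/ lt y x. Proof. destruct lswo as (_&_&H&_); auto. Qed.
Lemma l_wf : well_founded lt. Proof. destruct lswo as (_&_&_&H); auto. Qed.

Lemma nomaxS t : exists u, lt t u.
Proof.
  apply NNPP; intros H.
  apply (Hcof unit (fun _ _ => False) (fun _ => t)).
  - split; [|split; [|split]]; auto.
    + intros [] []; auto.
    + intros a; constructor; intros y [].
  - exists (fun _ => 0%nat). intros [] [] _; auto.
  - intros _ _ [].
  - intros k. exists tt. destruct (l_tot k t) as [?|[?|?]]; auto.
    exfalso; apply H; eauto.
Qed.

Lemma bound (kp : nat -> sub S) : (forall n, lt (kp n) (kp (Nat.succ n))) -> exists k, forall n, lt (kp n) k.
Proof.
  intros Hinc.
  assert (Hm : forall a b, (a < b)%nat -> lt (kp a) (kp b)).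
  { intros a b Hab. induction Hab; auto. eapply l_trans; eauto. }
  pose proof (Hcof nat Peano.lt kp swo_nat (card_le_refl nat) Hm) as H.
  apply not_all_ex_not in H. destruct H as [k Hk]. exists k. intros n.
  destruct (l_tot (kp n) k) as [?|[E|E]]; auto; exfalso; apply Hk; eauto.
Qed.

Definition mx (a b : sub S) : sub S := if excluded_middle_informative (lt a b) then b else a.
Definition le a b := a = b \/ lt a b.
Lemma mx_l a b : le a (mx a b).
Proof. unfold mx, le. destruct (excluded_middle_informative (lt a b)); auto. Qed.
Lemma mx_r a b : le b (mx a b).
Proof. unfold mx, le. destruct (excluded_middle_informative (lt a b)); auto.
  destruct (l_tot a b) as [?|[?|?]]; auto; contradiction. Qed.
Lemma le_lt a b c : le a b -> lt b c -> lt a c.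
Proof. intros [->|H] H'; eauto using l_trans. Qed.
Lemma lt_le a b c : lt a b -> le b c -> lt a c.
Proof. intros H [<-|H']; eauto using l_trans. Qed.

Lemma incr (kn : nat -> sub S) : exists kp : nat -> sub S,
  (forall n, lt (kp n) (kp (Nat.succ n))) /\ forall n, le (kn n) (kp n).
Proof.
  destruct (choice1 _ _ _ nomaxS) as [nx Hnx].
  set (kp := fix kp n := match n with 0%nat => kn 0%nat | Datatypes.S m => nx (mx (kp m) (kn (Nat.succ m))) end).
  exists kp. split.
  - intros n. apply le_lt with (b := mx (kp n) (kn (Nat.succ n))); [apply mx_l|apply Hnx].
  - intros [|n]. left; auto. right. apply le_lt with (b := mx (kp n) (kn (Nat.succ n))); [apply mx_r|apply Hnx].
Qed.

Lemma inv_small e : 0 < e -> exists n, / (INR n + 1) < e.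
Proof.
  intros He. destruct (archimed_cor1 e He) as [N [HN HN0]]. exists N.
  apply Rle_lt_trans with (/ INR N); auto.
  apply Rinv_le_contravar. apply lt_0_INR; auto. lra.
Qed.

Lemma netlb d : is_metric d -> induces d tau ->
  exists e0, 0 < e0 /\ forall C, is_net d e0 W C -> card_le (sub S) (sub C).
Proof.
  intros Hd Hi. apply NNPP; intros Hno.
  assert (Hr : forall n : nat, 0 < / (INR n + 1)).
  { intros n; apply Rinv_0_lt_compat. pose proof (pos_INR n); lra. }
  assert (Hall : forall n : nat, exists C, is_net d (/(INR n + 1)) W C /\ ~ card_le (sub S) (sub C)).
  { intros n. apply NNPP; intro H. apply Hno. exists (/(INR n+1)). split; auto.
    intros C HC. apply NNPP; intro H2. apply H; eauto. }
  destruct (choice1 _ _ _ Hall) as [Cn HCn].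
  set (r := fun n : nat => / (INR n + 1)) in *.
  set (Y := fun n (s : sub S) => exists c, Cn n c /\ d c (proj1_sig s) < 2 * r n /\
        forall s' : sub S, d c (proj1_sig s') < 2 * r n -> ~ lt s' s).
  assert (St1 : forall n, card_le (sub (Y n)) (sub (Cn n))).
  { intros n.
    assert (Hc : forall y : sub (Y n), exists c : sub (Cn n), d (proj1_sig c) (proj1_sig (proj1_sig y)) < 2 * r n /\
        forall s' : sub S, d (proj1_sig c) (proj1_sig s') < 2 * r n -> ~ lt s' (proj1_sig y)).
    { intros [s [c [H1 [H2 H3]]]]. exists (exist _ c H1). simpl. auto. }
    destruct (choice1 _ _ _ Hc) as [g Hg]. exists g. intros y1 y2 E.
    destruct (Hg y1) as [A1 B1]. destruct (Hg y2) as [A2 B2]. rewrite E in A1, B1.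
    apply sub_eq. destruct (l_tot (proj1_sig y1) (proj1_sig y2)) as [L|[L|L]]; auto.
    - exfalso; exact (B2 _ A1 L).
    - exfalso; exact (B1 _ A2 L). }
  assert (St2 : forall n, ~ card_le (sub S) (sub (Y n))).
  { intros n H. apply (proj2 (HCn n)). eapply card_le_trans; eauto. }
  assert (St3 : forall n, exists k (f : sub (Y n) -> sub S),
      (forall a, lt (f a) k) /\ (forall a b, f a = f b -> a = b)).
  { intros n. apply cmp; auto. apply lswo. }
  destruct (choice2 nat (sub S) (fun n => sub (Y n) -> sub S)
     (fun n k f => (forall a, lt (f a) k) /\ (forall a b, f a = f b -> a = b)) St3) as [kn [fn Hkf]].
  destruct (incr kn) as [kp [Hkp1 Hkp2]].
  destruct (bound kp Hkp1) as [k Hk].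
  set (T := fun j : sub S => exists n, lt j (kp n)).
  assert (HT : card_le (nat * sub T) (sub T)).
  { apply (nomax_prod (sub T) (fun a b : sub T => lt (proj1_sig a) (proj1_sig b))).
    - apply swo_sub, lswo.
    - intros [j [n Hj]]. exists (exist T (kp n) (ex_intro _ (Nat.succ n) (Hkp1 n))). simpl; auto. }
  set (E := fun x => exists s : sub S, proj1_sig s = x /\ exists n, Y n s).
  assert (HE : dense_in tau W E).
  { split.
    - intros x [s [Es _]]. subst. apply (proj1 HdS). apply (proj2_sig s).
    - intros U HU w Hw Uw. destruct (proj1 (Hi U) HU w Uw) as [e [He HeU]].
      destruct (inv_small (e/3)) as [n Hn]; [lra|].
      destruct (proj1 (HCn n) w Hw) as [c [Cc Dc]].
      destruct (dense_near X tau d Hd Hi W S HdS w Hw (r n) (Hr n)) as [s0 [Ss0 Ds0]].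
      assert (Hex : exists s : sub S, d c (proj1_sig s) < 2 * r n).
      { exists (exist _ s0 Ss0); simpl. pose proof (d_tri X d Hd c w s0). rewrite (d_sym X d Hd c w) in H.
        unfold r in *. lra. }
      destruct (wf_least _ lt l_wf _ Hex) as [s [Hs Hsmin]].
      exists (proj1_sig s). split.
      + exists s. split; auto. exists n. exists c. auto.
      + apply HeU. pose proof (d_tri X d Hd w c (proj1_sig s)). unfold r in *. lra. }
  assert (H8 : card_le (sub E) (nat * sub T)).
  { assert (Hsel : forall e : sub E, exists p : {n : nat & sub (Y n)},
        proj1_sig (proj1_sig (projT2 p)) = proj1_sig e).
    { intros [x [s [Es [n Hy]]]]. exists (existT _ n (exist _ s Hy)). simpl; auto. }
    destruct (choice1 _ _ _ Hsel) as [sel Hsel'].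
    assert (HTf : forall p : {n : nat & sub (Y n)}, T (fn (projT1 p) (projT2 p))).
    { intros [n y]. simpl. exists n. apply lt_le with (b := kn n); auto. apply Hkf. }
    exists (fun e => (projT1 (sel e), exist T (fn (projT1 (sel e)) (projT2 (sel e))) (HTf (sel e)))).
    intros e1 e2 Eq. injection Eq as E1 E2.
    pose proof (Hsel' e1) as H1. pose proof (Hsel' e2) as H2.
    revert E1 E2 H1 H2. destruct (sel e1) as [n1 y1], (sel e2) as [n2 y2]. simpl.
    intros E1 E2 H1 H2. subst n2. apply (proj2 (Hkf n1)) in E2. subst y2.
    apply sub_eq. etransitivity; [symmetry; exact H1|exact H2]. }
  assert (HTk : forall t : sub T, lt (proj1_sig t) k).
  { intros [j [n Hj]]. simpl. eapply l_trans; eauto. }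
  assert (H9 : card_le (sub T) {j | lt j k}).
  { exists (fun t => exist (fun j => lt j k) (proj1_sig t) (HTk t)).
    intros t1 t2 Eq. apply (f_equal (@proj1_sig _ _)) in Eq. simpl in Eq. apply sub_eq; auto. }
  apply (proj2 Hio k). eapply card_le_trans; [apply Hmin, HE|]. eapply card_le_trans; [exact H8|].
  eapply card_le_trans; [exact HT|exact H9].
Qed.
End Main.

Lemma net_mono (X : Type) (d : X -> X -> R) eps e W C : eps <= e -> is_net d eps W C -> is_net d e W C.
Proof. intros He H w Hw. destruct (H w Hw) as [c [Hc Hd]]. exists c; split; auto; lra. Qed.

Section Final.
Variables (X : Type) (tau : (X -> Prop) -> Prop) (W S : X -> Prop) (d : X -> X -> R).
Hypothesis HdS : dense_in tau W S.
Hypothesis Hd : is_metric d.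
Hypothesis Hi : induces d tau.

Lemma dist_inj eps A : 0 < eps -> Defs.incl A W -> distinguishable d eps A -> card_le (sub A) (sub S).
Proof.
  intros He HA HdA.
  assert (H : forall a : sub A, exists s : sub S, d (proj1_sig a) (proj1_sig s) < eps / 2).
  { intros [a Ha]. destruct (dense_near X tau d Hd Hi W S HdS a (HA a Ha) (eps/2)) as [s [Hs Ds]]; [lra|].
    exists (exist _ s Hs); auto. }
  destruct (choice1 _ _ _ H) as [g Hg]. exists g. intros a1 a2 E. apply sub_eq.
  apply NNPP; intro Hn. pose proof (HdA _ _ (proj2_sig a1) (proj2_sig a2) Hn).
  pose proof (Hg a1). pose proof (Hg a2). rewrite E in H1.
  pose proof (d_tri X d Hd (proj1_sig a1) (proj1_sig (g a2)) (proj1_sig a2)).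
  rewrite (d_sym X d Hd (proj1_sig (g a2)) (proj1_sig a2)) in H3. lra.
Qed.

Lemma S_net eps : 0 < eps -> is_net d eps W S.
Proof.
  intros He w Hw. destruct (dense_near X tau d Hd Hi W S HdS w Hw eps He) as [s [Hs Ds]].
  exists s; split; auto; lra.
Qed.

Lemma maxd_net eps A : 0 < eps -> maximal_distinguishable d eps W A -> is_net d eps W A.
Proof.
  intros He [HA [HdA Hmax]] w Hw. apply NNPP; intro Hn.
  assert (Hw' : A w).
  { apply (Hmax (fun x => A x \/ x = w)).
    - intros x [Hx| ->]; auto.
    - intros x y [Hx| ->] [Hy| ->] Hxy.
      + auto.
      + apply Rnot_le_lt. intro Hl. apply Hn. exists x. rewrite d_sym; auto.
      + apply Rnot_le_lt. intro Hl. apply Hn. exists y. auto.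
      + congruence.
    - intros x Hx; auto.
    - auto. }
  apply Hn. exists w. split; [exact Hw'|]. rewrite (d_xx X d Hd). lra.
Qed.

Variable lt : sub S -> sub S -> Prop.
Hypothesis Hswo : strict_well_order lt.
Variable eps : R.

Lemma f_wf : well_founded lt. Proof. destruct Hswo as (_&_&_&H); auto. Qed.

Definition Fg (s : sub S) (rec : forall t, lt t s -> bool) : bool :=
  if excluded_middle_informative (forall t (H : lt t s), rec t H = true -> eps < d (proj1_sig s) (proj1_sig t))
  then true else false.

Definition gg : sub S -> bool := Fix f_wf (fun _ => bool) Fg.

Lemma gg_eq s : gg s = Fg s (fun t _ => gg t).
Proof.
  unfold gg. apply (Fix_eq f_wf (fun _ => bool) Fg). intros x f g Hfg.
  assert (f = g) as ->; auto.
  apply functional_extensionality_dep; intro y'. apply functional_extensionality_dep; intro p. auto.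
Qed.

Lemma gg_spec s : gg s = true <-> forall t, lt t s -> gg t = true -> eps < d (proj1_sig s) (proj1_sig t).
Proof.
  rewrite gg_eq. unfold Fg.
  destruct (excluded_middle_informative _) as [H|H]; split; intros; try discriminate; auto.
Qed.

Definition Gset (x : X) : Prop := exists s : sub S, proj1_sig s = x /\ gg s = true.

Lemma G_incl : Defs.incl Gset W.
Proof. intros x [s [<- _]]. apply (proj1 HdS). apply (proj2_sig s). Qed.

Lemma G_dist : distinguishable d eps Gset.
Proof.
  intros x y [s [<- Hs]] [t [<- Ht]] Hn.
  destruct Hswo as (_&_&Htot&_).
  destruct (Htot s t) as [L|[L|L]].
  - rewrite d_sym; auto. apply (proj1 (gg_spec t)); auto.
  - subst; congruence.
  - apply (proj1 (gg_spec s)); auto.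
Qed.

Lemma G_net : 0 < eps -> is_net d (2 * eps) W Gset.
Proof.
  intros He w Hw. destruct (dense_near X tau d Hd Hi W S HdS w Hw eps He) as [s0 [Hs0 Ds]].
  set (s := exist S s0 Hs0).
  destruct (classic (gg s = true)) as [H|H].
  - exists s0. split; [exists s; auto|lra].
  - rewrite gg_spec in H. apply not_all_ex_not in H. destruct H as [t Ht].
    apply imply_to_and in Ht. destruct Ht as [Lt Ht]. apply imply_to_and in Ht. destruct Ht as [Gt Ht].
    apply Rnot_lt_le in Ht.
    exists (proj1_sig t). split; [exists t; auto|].
    pose proof (d_tri X d Hd w s0 (proj1_sig t)). simpl in Ht. lra.
Qed.
End Final.

Theorem corollary2p12 (X : Type) (tau : (X -> Prop) -> Prop) (W : X -> Prop)
  (D : list (X -> X -> R))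
  (Htau : metrizable tau)
  (Hden : exists S, min_card (dense_in tau W) S /\ uncountable_cofinality (sub S))
  (HD : forall d, In d D -> is_metric d /\ induces d tau) :
  exists eps0, 0 < eps0 /\
    forall eps, 0 < eps < eps0 ->
    forall d1 d2, In d1 D -> In d2 D ->
      (* Nhat_eps(W) = Nhat^W_eps(W) *)
      (forall C1 C2, is_NhatA d1 eps W W C1 -> is_NhatA d2 eps W W C2 ->
         card_eq (sub C1) (sub C2)) /\
      (* Nhat^X_eps(W) *)
      (forall C1 C2, is_NhatA d1 eps (fun _ => True) W C1 ->
         is_NhatA d2 eps (fun _ => True) W C2 -> card_eq (sub C1) (sub C2)) /\
      (* Mhat_eps(W) *)
      (forall A1 A2, is_Mhat d1 eps W A1 -> is_Mhat d2 eps W A2 ->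
         card_eq (sub A1) (sub A2)) /\
      (* M^*_eps(W) *)
      (forall K1 K2 : Type, is_Mstar d1 eps W K1 -> is_Mstar d2 eps W K2 ->
         card_eq K1 K2).
Proof.
  destruct Hden as [S [[HdS Hmin] [lt [Hio Hcof]]]].
  assert (Hlist : forall D', (forall d, In d D' -> In d D) -> exists e, 0 < e /\
     forall d, In d D' -> forall C, is_net d e W C -> card_le (sub S) (sub C)).
  { induction D' as [|d0 D' IH]; intros Hsub.
    - exists 1; split; [lra|]. intros d [].
    - destruct IH as [e [He HH]]. { intros d Hd; apply Hsub; right; auto. }
      destruct (HD d0 (Hsub d0 (or_introl eq_refl))) as [Hm Hi].
      destruct (netlb X tau W S lt Hio Hcof HdS Hmin d0 Hm Hi) as [e0 [He0 HH0]].
      exists (Rmin e e0). split; [apply Rmin_pos; auto|].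
      intros d [<-|Hd] C HC.
      + apply HH0. eapply net_mono; [|exact HC]. apply Rmin_r.
      + apply (HH d Hd). eapply net_mono; [|exact HC]. apply Rmin_l. }
  destruct (Hlist D (fun d H => H)) as [e [He HH]].
  exists (e / 2). split; [lra|]. intros eps [Heps Heps2].
  assert (Hswo : strict_well_order lt) by apply Hio.
  assert (Key : forall d, In d D ->
     (forall A C, Defs.incl W A -> is_NhatA d eps A W C -> card_eq (sub C) (sub S)) /\
     (forall A, is_Mhat d eps W A -> card_eq (sub A) (sub S)) /\
     (forall K : Type, is_Mstar d eps W K -> card_eq K (sub S))).
  { intros d Hd. destruct (HD d Hd) as [Hm Hi].
    assert (Hlb : forall C, is_net d eps W C -> card_le (sub S) (sub C)).
    { intros C HC. apply (HH d Hd). eapply net_mono; [|exact HC]. lra. }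
    split; [|split].
    - intros A C HA [[HCA HCn] HCmin]. apply csb.
      + apply HCmin. split.
        * intros x Hx. apply HA, (proj1 HdS), Hx.
        * apply (S_net X tau W S d HdS Hm Hi); auto.
      + apply Hlb; auto.
    - intros A [[HAW [HAd HAm]] HAmin]. apply csb.
      + apply (dist_inj X tau W S d HdS Hm Hi eps A); auto.
      + apply Hlb. apply (maxd_net X W d Hm eps A); auto. split; auto.
    - intros K [HK1 HK2]. apply csb.
      + apply HK2. intros A HA HAd. apply (dist_inj X tau W S d HdS Hm Hi eps A); auto.
      + eapply card_le_trans; [|apply HK1].
        * apply (HH d Hd). eapply net_mono; [|apply (G_net X tau W S d HdS Hm Hi lt Hswo eps Heps)]. lra.
        * apply (G_incl X tau W S d HdS lt Hswo eps).
        * apply (G_dist X S d Hm lt Hswo eps). }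
  intros d1 d2 H1 H2.
  destruct (Key d1 H1) as (A1 & B1 & C1). destruct (Key d2 H2) as (A2 & B2 & C2).
  split; [|split; [|split]].
  - intros P Q HP HQ. eapply card_eq_trans; [apply (A1 W); [intros x; auto|exact HP]|].
    apply card_eq_sym. apply (A2 W); [intros x; auto|exact HQ].
  - intros P Q HP HQ. eapply card_eq_trans; [apply (A1 (fun _ => True)); [intros x; auto|exact HP]|].
    apply card_eq_sym. apply (A2 (fun _ => True)); [intros x; auto|exact HQ].
  - intros P Q HP HQ. eapply card_eq_trans; [apply B1; exact HP|]. apply card_eq_sym, B2, HQ.
  - intros P Q HP HQ. eapply card_eq_trans; [apply C1; exact HP|]. apply card_eq_sym, C2, HQ.
Qed.
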